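(* Let $\gamma$ be the Euler–Mascheroni constant and $\zeta$ the Riemann zeta function. Then $$\lim_{x\to\infty}\left\{\zeta\Bigl(\ln\bigl[\ln(\ln\zeta(x)+1)+1\bigr]+1\Bigr)-2^x+\Bigl(\frac43\Bigr)^x-\frac12\right\}=\gamma .$$ *)

(* Defs.v *)
From Stdlib Require Import Reals.
From Coquelicot Require Import Coquelicot.
Open Scope R_scope.

(* Riemann zeta function on real s > 1: zeta s = sum_{n>=1} n^(-s).
   (Series returns 0 for divergent series; only s > 1 is used.) *)
Definition zeta (s : R) : R := Series (fun n : nat => / Rpower (INR (n + 1)) s).

Fixpoint harmonic (n : nat) : R :=
  match n with O => 0 | S m => harmonic m + / INR (S m) end.

Definition euler_gamma : R := real (Lim_seq (fun n : nat => harmonic n - ln (INR n))).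

(* Main.v *)
Require Import Defs.
From Stdlib Require Import Reals Lra Psatz.
From Coquelicot Require Import Coquelicot.
Open Scope R_scope.
Open Scope R_scope.
Lemma ln_le_sub1 y : 0 < y -> ln y <= y - 1.
Proof. intros Hy. pose proof (exp_ineq1_le (ln y)). rewrite exp_ln in H; lra. Qed.

Lemma ln1p_lower y : 0 <= y -> y - y^2/2 <= ln (1+y).
Proof.
  intros Hy. destruct (Req_dec y 0) as [->|Hn].
  { replace (1+0) with 1 by lra. rewrite ln_1. lra. }
  destruct (MVT_cor2 (fun z => ln (1+z) - z + z^2/2) (fun z => z^2/(1+z)) 0 y) as [c [Hc1 Hc2]].
  - lra.
  - intros c Hc. apply is_derive_Reals. auto_derive. lra. field. lra.
  - replace (1+0) with 1 in Hc1 by lra. rewrite ln_1 in Hc1.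
    assert (0 <= c^2/(1+c)). { apply Rmult_le_pos. nra. apply Rlt_le, Rinv_0_lt_compat. lra. }
    nra.
Qed.

Lemma ln1p_upper y : 0 <= y -> ln (1+y) <= y - y^2/2 + y^3/3.
Proof.
  intros Hy. destruct (Req_dec y 0) as [->|Hn].
  { replace (1+0) with 1 by lra. rewrite ln_1. lra. }
  destruct (MVT_cor2 (fun z => z - z^2/2 + z^3/3 - ln (1+z)) (fun z => z^3/(1+z)) 0 y) as [c [Hc1 Hc2]].
  - lra.
  - intros c Hc. apply is_derive_Reals. auto_derive. lra. field. lra.
  - replace (1+0) with 1 in Hc1 by lra. rewrite ln_1 in Hc1.
    assert (0 <= c^3/(1+c)). { apply Rmult_le_pos. assert (0 <= c) by lra. nra. apply Rlt_le, Rinv_0_lt_compat. lra. }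
    nra.
Qed.

Lemma ln1p_le y : 0 <= y -> ln (1+y) <= y.
Proof. intros. pose proof (ln_le_sub1 (1+y)). lra. Qed.

Lemma mul_bd x y X Y : -X <= x <= X -> -Y <= y <= Y -> -(X*Y) <= x*y <= X*Y.
Proof. intros. nra. Qed.
Lemma mul_bdp x y X Y : -X <= x <= X -> 0 <= y <= Y -> -(X*Y) <= x*y <= X*Y.
Proof. intros. nra. Qed.
Lemma cube_le x X : 0 <= x <= X -> x^3 <= X^3.
Proof. intros. apply pow_incr; lra. Qed.

Lemma core_alg a b r t L1 L2 L3 :
  0 < a -> 0 < b -> 0 <= r -> t <= 1/100 -> a <= t -> b <= a*t -> b^2 <= a^3*t -> r <= a^2*t ->
  let v := a+b+a^2+r in
  v - v^2/2 <= L1 <= v - v^2/2 + v^3/3 ->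
  L1 - L1^2/2 <= L2 <= L1 - L1^2/2 + L1^3/3 ->
  L2 - L2^2/2 <= L3 <= L2 - L2^2/2 + L2^3/3 ->
  a/2 <= L3 /\ Rabs (1/L3 - 1/a + b/a^2 - 1/2) <= 40*t.
Proof.
  intros Ha Hb Hr Ht Hat Hbt Hb2 Hrt v H1 H2 H3.
  assert (Ht0 : 0 < t) by lra.
  assert (Haa : a*a <= a*t) by (apply Rmult_le_compat_l; lra).
  assert (Ha2 : a^2*t <= a*t/100).
  { assert (a*a*t <= (1/100)*a*t). apply Rmult_le_compat_r. lra. nra. nra. }
  assert (Ha3 : a^3 <= a^2*t). { assert (a^2*a <= a^2*t) by (apply Rmult_le_compat_l; nra). nra. }
  assert (Hva : v - a = b + a^2 + r) by (unfold v; ring).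
  clearbody v.
  assert (Hat1 : a*t <= a/100) by nra.
  assert (Ha2p : 0 <= a^2) by nra.
  assert (Haa' : a^2 <= a*t) by nra.
  assert (Hvma : 0 <= v - a <= 3*a*t) by lra.
  assert (Hv2 : 0 <= v^2 - a^2 <= 9*a^2*t).
  { replace (v^2 - a^2) with ((v-a)*(v+a)) by ring.
    pose proof (mul_bdp (v-a) (v+a) (3*a*t) (3*a) ltac:(lra) ltac:(lra)). split; [apply Rmult_le_pos; lra | lra]. }
  assert (Hv3 : v^3 <= 8*a^2*t).
  { pose proof (cube_le v (2*a) ltac:(lra)). lra. }
  set (d1 := L1 - (a+b+a^2/2)).
  assert (Hd1 : -5*a^2*t <= d1 <= 5*a^2*t).
  { assert (E : d1 = r + a^2/2 - v^2/2 + (L1 - (v - v^2/2))) by (unfold d1; rewrite <- (Rplus_0_r v); replace (v+0) with (a + (b+a^2+r)) by lra; field). lra. }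
  set (w1 := b + a^2/2 + d1).
  assert (Hw1 : -2*a*t <= w1 <= 2*a*t) by (unfold w1; lra).
  assert (HL1 : L1 = a + w1) by (unfold w1, d1; field).
  assert (HL1sq : -6*a^2*t <= L1^2 - a^2 <= 6*a^2*t).
  { rewrite HL1. replace ((a+w1)^2 - a^2) with (w1*(2*a+w1)) by ring.
    pose proof (mul_bdp w1 (2*a+w1) (2*a*t) (3*a) ltac:(lra) ltac:(lra)). lra. }
  assert (HL1c : 0 <= L1^3 <= 9*a^2*t).
  { pose proof (cube_le L1 (2*a) ltac:(lra)). split. apply pow_le; lra. lra. }
  set (d2 := L2 - (a+b)).
  assert (Hd2 : -11*a^2*t <= d2 <= 11*a^2*t).
  { assert (E : d2 = d1 - (L1^2 - a^2)/2 + (L2 - (L1 - L1^2/2))) by (unfold d2, d1; field). lra. }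
  set (w2 := b + d2).
  assert (Hw2 : -2*a*t <= w2 <= 2*a*t) by (unfold w2; lra).
  assert (HL2 : L2 = a + w2) by (unfold w2, d2; field).
  assert (HL2sq : -6*a^2*t <= L2^2 - a^2 <= 6*a^2*t).
  { rewrite HL2. replace ((a+w2)^2 - a^2) with (w2*(2*a+w2)) by ring.
    pose proof (mul_bdp w2 (2*a+w2) (2*a*t) (3*a) ltac:(lra) ltac:(lra)). lra. }
  assert (HL2c : 0 <= L2^3 <= 9*a^2*t).
  { pose proof (cube_le L2 (2*a) ltac:(lra)). split. apply pow_le; lra. lra. }
  set (d3 := L3 - (a+b-a^2/2)).
  assert (Hd3 : -17*a^2*t <= d3 <= 17*a^2*t).
  { assert (E : d3 = d2 - (L2^2 - a^2)/2 + (L3 - (L2 - L2^2/2))) by (unfold d3, d2; field). lra. }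
  set (c := b - a^2/2).
  assert (HL3 : L3 = a + c + d3) by (unfold c, d3; field).
  assert (HL3a : a/2 <= L3) by lra.
  split; [exact HL3a|].
  assert (Hc : -a*t <= c <= a*t) by (unfold c; lra).
  assert (Hc2 : 0 <= c^2 <= 2*a^3*t).
  { split. apply pow2_ge_0. assert (E : c^2 = b^2 - a^2*b + a^2*a^2/4) by (unfold c; field).
    assert (0 <= a^2*b) by (apply Rmult_le_pos; [apply pow2_ge_0|lra]).
    assert (a^2*a^2 <= a^2*(a*t)) by (apply Rmult_le_compat_l; [apply pow2_ge_0|lra]). assert (a^2*(a*t) = a^3*t) by ring. assert (0 <= a^3*t) by (apply Rmult_le_pos; [apply pow_le|]; lra). lra. }
  assert (Hcd : -(a*t*(17*a^2*t)) <= c*d3 <= a*t*(17*a^2*t)) by (apply mul_bd; lra).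
  assert (Hcd' : a*t*(17*a^2*t) <= a^3*t).
  { assert (a*t*(17*a^2*t) = a^3*t*(17*t)) by ring. assert (a^3*t*(17*t) <= a^3*t*1) by (apply Rmult_le_compat_l; [apply Rmult_le_pos; [apply pow_le|]|]; lra). lra. }
  assert (Had : -(17*a^3*t) <= a*d3 <= 17*a^3*t).
  { assert (E: a*d3 = d3*a) by ring. pose proof (mul_bdp d3 a (17*a^2*t) a ltac:(lra) ltac:(lra)). lra. }
  set (F := 1/L3 - 1/a + b/a^2 - 1/2).
  assert (HF : F * (a^2*L3) = c^2 + c*d3 - a*d3).
  { assert (E1 : F * (a^2*L3) = a^2 + L3*(b - a - a^2/2)) by (unfold F; field; split; lra).
    rewrite E1, HL3. unfold c. field. }
  assert (Hpos : a^3/2 <= a^2*L3).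
  { assert (a^2*(a/2) <= a^2*L3) by (apply Rmult_le_compat_l; nra). lra. }
  assert (HB : Rabs (F * (a^2*L3)) <= 20*a^3*t).
  { rewrite HF. apply Rabs_le. lra. }
  assert (Ha3p : 0 < a^3) by (apply pow_lt; lra).
  rewrite Rabs_mult in HB. rewrite (Rabs_right (a^2*L3)) in HB by lra.
  assert (Rabs F * (a^3/2) <= Rabs F * (a^2*L3)) by (apply Rmult_le_compat_l; [apply Rabs_pos|lra]).
  assert (Rabs F * (a^3/2) <= (40*t)*(a^3/2)) by lra.
  apply Rmult_le_reg_r in H0; lra.
Qed.


Lemma exp_le_mono x y : x <= y -> exp x <= exp y.
Proof. intros [H|H]. left; apply exp_increasing; auto. subst; lra. Qed.

Lemma exp_pos' x : 0 < exp x.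
Proof. apply exp_pos. Qed.

Lemma dln_bounds m : 0 < m -> 1/(m+1) <= ln (m+1) - ln m <= 1/m.
Proof.
  intros Hm. split.
  - pose proof (ln_le_sub1 (m/(m+1)) ltac:(apply Rdiv_lt_0_compat; lra)).
    rewrite ln_div in H by lra. assert (m/(m+1) - 1 = - (1/(m+1))) by (field; lra). lra.
  - pose proof (ln_le_sub1 ((m+1)/m) ltac:(apply Rdiv_lt_0_compat; lra)).
    rewrite ln_div in H by lra. assert ((m+1)/m - 1 = 1/m) by (field; lra). lra.
Qed.

Lemma exp_inv_ln m : 0 < m -> exp (- ln m) = 1/m.
Proof. intros. rewrite exp_Ropp, exp_ln by auto. field. lra. Qed.

Lemma keyK h m : 0 < h -> 1 <= m ->
  h * exp (-((1+h) * ln (m+1))) <= exp (-(h*ln m)) - exp (-(h*ln (m+1)))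
  <= h * exp (-((1+h) * ln m)).
Proof.
  intros Hh Hm. set (A := ln m). set (B := ln (m+1)).
  pose proof (dln_bounds m ltac:(lra)) as HD. fold A B in HD.
  assert (EA : exp (-((1+h)*A)) = exp (-(h*A)) * (1/m)).
  { rewrite <- exp_inv_ln by lra. fold A. rewrite <- exp_plus. f_equal; ring. }
  assert (EB : exp (-((1+h)*B)) = exp (-(h*B)) * (1/(m+1))).
  { rewrite <- exp_inv_ln by lra. fold B. rewrite <- exp_plus. f_equal; ring. }
  rewrite EA, EB. split.
  - assert (E : exp (-(h*A)) = exp (-(h*B)) * exp (h*(B-A))) by (rewrite <- exp_plus; f_equal; ring).
    pose proof (exp_ineq1_le (h*(B-A))). pose proof (exp_pos' (-(h*B))).
    rewrite E. assert (h*(B-A) >= h*(1/(m+1))) by nra. nra.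
  - assert (E : exp (-(h*B)) = exp (-(h*A)) * exp (-(h*(B-A)))) by (rewrite <- exp_plus; f_equal; ring).
    pose proof (exp_ineq1_le (-(h*(B-A)))). pose proof (exp_pos' (-(h*A))).
    rewrite E. assert (h*(B-A) <= h*(1/m)) by nra. nra.
Qed.

Definition u (s : R) (n : nat) : R := / Rpower (INR (n + 1)) s.
Definition g (h : R) (n : nat) : R := exp (-(h * ln (INR n + 1))).
Definition Sp (s : R) (N : nat) : R := sum_n (u s) N.

Lemma INR_p1 n : INR (n+1) = INR n + 1.
Proof. rewrite plus_INR. simpl. ring. Qed.

Lemma u_eq s n : u s n = exp (-(s * ln (INR n + 1))).
Proof. unfold u, Rpower. rewrite INR_p1, exp_Ropp. reflexivity. Qed.

Lemma INR_pos1 n : 1 <= INR n + 1.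
Proof. pose proof (pos_INR n). lra. Qed.

Lemma u_pos s n : 0 < u s n.
Proof. rewrite u_eq. apply exp_pos. Qed.

Lemma u_g h n : 0 < h -> h * u (1+h) (S n) <= g h n - g h (S n) <= h * u (1+h) n.
Proof.
  intros Hh. rewrite !u_eq. unfold g. rewrite S_INR.
  apply keyK; auto. apply INR_pos1.
Qed.

Lemma Sp_succ s N : Sp s (S N) = Sp s N + u s (S N).
Proof. unfold Sp. rewrite sum_Sn. reflexivity. Qed.

Lemma Sp_0 s : Sp s 0 = u s 0.
Proof. unfold Sp. rewrite sum_O. reflexivity. Qed.

Lemma g_pos h n : 0 < g h n.
Proof. apply exp_pos. Qed.

Lemma g_0 h : g h 0 = 1.
Proof. unfold g. simpl. replace (0+1) with 1 by ring. rewrite ln_1. replace (-(h*0)) with 0 by ring. apply exp_0. Qed.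

Lemma tail h M k : 0 < h -> h * (Sp (1+h) (M+k) - Sp (1+h) M) <= g h M - g h (M+k).
Proof.
  intros Hh. induction k.
  - rewrite Nat.add_0_r. lra.
  - rewrite Nat.add_succ_r, Sp_succ. pose proof (u_g h (M+k) Hh). lra.
Qed.

Lemma Sp_bound h N : 0 < h -> Sp (1+h) N <= 1 + 1/h.
Proof.
  intros Hh. pose proof (tail h 0 N Hh). simpl in H. rewrite Sp_0, g_0 in H.
  assert (u (1+h) 0 = 1). { rewrite u_eq. simpl. replace (0+1) with 1 by ring. rewrite ln_1. replace (-((1+h)*0)) with 0 by ring. apply exp_0. }
  pose proof (g_pos h N). rewrite H0 in H.
  assert (h * (Sp (1+h) N - 1) <= h * (1/h)) by (replace (h*(1/h)) with 1 by (field; lra); lra).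
  apply Rmult_le_reg_l in H2; lra.
Qed.

Lemma Sp_incr s N : Sp s N <= Sp s (S N).
Proof. rewrite Sp_succ. pose proof (u_pos s (S N)). lra. Qed.

Lemma zeta_lim h : 0 < h -> is_lim_seq (Sp (1+h)) (zeta (1+h)).
Proof.
  intros Hh.
  assert (Hex : ex_finite_lim_seq (Sp (1+h))).
  { apply ex_finite_lim_seq_incr with (1 + 1/h). apply Sp_incr. intros; apply Sp_bound; auto. }
  pose proof (Lim_seq_correct' _ Hex).
  apply ex_finite_lim_seq_correct in Hex. destruct Hex as [_ Hf].
  change (zeta (1+h)) with (real (Lim_seq (Sp (1+h)))). exact H.
Qed.

Lemma g_lim h : 0 < h -> is_lim_seq (g h) 0.
Proof.
  intros Hh. apply is_lim_seq_spec. intros eps.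
  destruct (INR_archimed 1 (exp (1/(h*eps))) ltac:(lra)) as [N HN].
  exists N. intros n Hn.
  assert (HnN : INR N <= INR n) by (apply le_INR; auto).
  assert (Hl : 1/(h*eps) < ln (INR n + 1)).
  { rewrite <- (ln_exp (1/(h*eps))). apply ln_increasing. apply exp_pos. lra. }
  pose proof (cond_pos eps) as He.
  assert (Hx : 1/eps < h * ln (INR n + 1)).
  { assert (h * (1/(h*eps)) < h * ln (INR n + 1)) by (apply Rmult_lt_compat_l; lra).
    replace (h * (1/(h*eps))) with (1/eps) in H by (field; lra). lra. }
  unfold g. rewrite Rminus_0_r, Rabs_right by (left; apply exp_pos).
  pose proof (exp_ineq1_le (h * ln (INR n + 1))).
  rewrite exp_Ropp.
  assert (1/eps + 1 < exp (h * ln (INR n + 1))) by lra.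
  assert (0 < 1/eps) by (apply Rdiv_lt_0_compat; lra).
  apply Rlt_le_trans with (/ (1/eps + 1)).
  - apply Rinv_lt_contravar; [nra| lra].
  - assert (1/eps + 1 > 1/eps) by lra.
    apply Rle_trans with (/(1/eps)).
    left. apply Rinv_lt_contravar; [apply Rmult_lt_0_compat; lra | lra].
    right. field. lra.
Qed.

Definition A (h : R) (N : nat) : R := Sp (1+h) N - (1 - g h (S N))/h.

Lemma A_tail h N k : 0 < h -> 0 <= A h (N+k) - A h N <= u (1+h) (S N) - u (1+h) (S (N+k)).
Proof.
  intros Hh. induction k.
  - rewrite Nat.add_0_r. lra.
  - rewrite Nat.add_succ_r. pose proof (u_g h (S (N+k)) Hh).
    assert (E : A h (S (N+k)) - A h (N+k) = u (1+h) (S (N+k)) - (g h (S (N+k)) - g h (S (S (N+k))))/h).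
    { unfold A. rewrite Sp_succ. field. lra. }
    assert (0 <= u (1+h) (S (N+k)) - (g h (S (N+k)) - g h (S (S (N+k))))/h <= u (1+h) (S (N+k)) - u (1+h) (S (S (N+k)))).
    { split.
      - apply Rmult_le_reg_l with h; auto. rewrite Rmult_0_r. unfold Rminus at 1. rewrite Rmult_plus_distr_l.
        replace (h * - ((g h (S (N+k)) - g h (S (S (N+k))))/h)) with (- (g h (S (N+k)) - g h (S (S (N+k))))) by (field; lra). lra.
      - apply Rmult_le_reg_l with h; auto. unfold Rminus at 1. rewrite Rmult_plus_distr_l.
        replace (h * - ((g h (S (N+k)) - g h (S (S (N+k))))/h)) with (- (g h (S (N+k)) - g h (S (S (N+k))))) by (field; lra). lra. }
    lra.
Qed.

Lemma A_lim h : 0 < h -> is_lim_seq (A h) (zeta (1+h) - 1/h).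
Proof.
  intros Hh.
  assert (H1 : is_lim_seq (fun N => g h (S N)) 0) by (apply (is_lim_seq_incr_1 (g h)); apply g_lim; auto).
  assert (H2 : is_lim_seq (fun N => (1 - g h (S N))/h) (/h * (1 - 0))).
  { assert (Hm : is_lim_seq (fun N => 1 - g h (S N)) (1 - 0)) by (apply is_lim_seq_minus'; [apply is_lim_seq_const | auto]).
    pose proof (is_lim_seq_scal_l _ (/h) _ Hm) as H3. simpl in H3.
    eapply is_lim_seq_ext; [|exact H3]. intros; simpl; unfold Rdiv; ring. }
  replace (zeta (1+h) - 1/h) with (zeta (1+h) - /h*(1-0)) by (unfold Rdiv; ring).
  apply is_lim_seq_minus'. apply zeta_lim; auto. auto.
Qed.

Lemma Z_tail h N : 0 < h -> 0 <= zeta (1+h) - 1/h - A h N <= 1/(INR N + 2).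
Proof.
  intros Hh. pose proof (A_lim h Hh) as HL.
  apply (is_lim_seq_incr_n _ N) in HL.
  assert (Hu : u (1+h) (S N) <= 1/(INR N + 2)).
  { rewrite u_eq, S_INR. replace (INR N + 1 + 1) with (INR N + 2) by ring.
    assert (0 <= ln (INR N + 2)) by (rewrite <- ln_1; apply ln_le; pose proof (pos_INR N); lra).
    apply Rle_trans with (exp (- ln (INR N + 2))). apply exp_le_mono. nra.
    rewrite exp_inv_ln. lra. pose proof (pos_INR N); lra. }
  split.
  - assert (Rbar_le (A h N) (zeta (1+h) - 1/h)).
    { apply (is_lim_seq_le (fun _ => A h N) (fun n => A h (n+N)%nat)); auto.
      intros n. rewrite Nat.add_comm. pose proof (A_tail h N n Hh). lra. apply is_lim_seq_const. }
    simpl in H. lra.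
  - assert (Rbar_le (zeta (1+h) - 1/h) (A h N + u (1+h) (S N))).
    { apply (is_lim_seq_le (fun n => A h (n+N)%nat) (fun _ => A h N + u (1+h) (S N))); auto.
      intros n. rewrite Nat.add_comm. pose proof (A_tail h N n Hh). pose proof (u_pos (1+h) (S (N+n))). lra. apply is_lim_seq_const. }
    simpl in H. lra.
Qed.

Definition G (N : nat) : R := harmonic (S N) - ln (INR (S N) + 1).

Lemma harm_S n : harmonic (S n) = harmonic n + / INR (S n).
Proof. reflexivity. Qed.

Lemma G_incr N : 0 <= G (S N) - G N <= 1/(INR N + 2) - 1/(INR N + 3).
Proof.
  unfold G. rewrite (harm_S (S N)). rewrite !S_INR.
  set (m := INR N + 1 + 1).
  assert (Hm : 2 <= m) by (unfold m; pose proof (pos_INR N); lra).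
  replace (INR N + 1 + 1 + 1) with (m + 1) by (unfold m; ring).
  replace (INR N + 2) with m by (unfold m; ring).
  replace (INR N + 3) with (m+1) by (unfold m; ring).
  replace (INR N + 1 + 1) with m by (unfold m; ring).
  pose proof (dln_bounds m ltac:(lra)).
  assert (/m = 1/m) by (field; lra). lra.
Qed.

Lemma G_tail N k : 0 <= G (N+k) - G N <= 1/(INR N + 2) - 1/(INR (N+k) + 2).
Proof.
  induction k.
  - rewrite Nat.add_0_r. lra.
  - rewrite Nat.add_succ_r. pose proof (G_incr (N+k)).
    rewrite S_INR. replace (INR (N+k) + 1 + 2) with (INR (N+k) + 3) by ring. lra.
Qed.

Definition gam : R := real (Lim_seq G).

Lemma G_lim : is_lim_seq G gam.
Proof.
  assert (Hex : ex_finite_lim_seq G).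
  { apply ex_finite_lim_seq_incr with (G 0 + 1).
    - intros n. pose proof (G_incr n). lra.
    - intros n. pose proof (G_tail 0 n). simpl in H.
      assert (0 < 1/(INR n + 2)) by (apply Rdiv_lt_0_compat; pose proof (pos_INR n); lra).
      assert (1/(0+2) <= 1) by lra. lra. }
  pose proof (Lim_seq_correct' _ Hex). exact H.
Qed.

Lemma G_gam N : 0 <= gam - G N <= 1/(INR N + 2).
Proof.
  pose proof G_lim as HL. apply (is_lim_seq_incr_n _ N) in HL.
  split.
  - assert (Rbar_le (G N) gam).
    { apply (is_lim_seq_le (fun _ => G N) (fun n => G (n+N)%nat)); auto.
      intros n. rewrite Nat.add_comm. pose proof (G_tail N n). lra. apply is_lim_seq_const. }
    simpl in H. lra.
  - assert (Rbar_le gam (G N + 1/(INR N + 2))).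
    { apply (is_lim_seq_le (fun n => G (n+N)%nat) (fun _ => G N + 1/(INR N + 2))); auto.
      intros n. rewrite Nat.add_comm. pose proof (G_tail N n).
      assert (0 < 1/(INR (N+n) + 2)) by (apply Rdiv_lt_0_compat; pose proof (pos_INR (N+n)); lra). lra.
      apply is_lim_seq_const. }
    simpl in H. lra.
Qed.

Lemma euler_gamma_eq : euler_gamma = gam.
Proof.
  unfold euler_gamma.
  assert (H : is_lim_seq (fun n => harmonic n - ln (INR n)) gam).
  { apply is_lim_seq_incr_1.
    apply is_lim_seq_ext with (fun n => G n + (ln (INR (S n) + 1) - ln (INR (S n)))).
    { intros n. unfold G. ring. }
    replace gam with (gam + 0) by ring.
    apply is_lim_seq_plus'. apply G_lim.
    apply is_lim_seq_le_le with (fun _ => 0) (fun n => / INR (S n)).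
    - intros n. rewrite S_INR. pose proof (dln_bounds (INR n + 1) ltac:(pose proof (pos_INR n); lra)).
      assert (0 < 1/(INR n + 1 + 1)) by (apply Rdiv_lt_0_compat; pose proof (pos_INR n); lra).
      assert (1/(INR n + 1) = /(INR n + 1)) by (field; pose proof (pos_INR n); lra). lra.
    - apply is_lim_seq_const.
    - pose proof (is_lim_seq_inv (fun n => INR (S n)) p_infty (proj1 (is_lim_seq_incr_1 INR p_infty) is_lim_seq_INR) ltac:(discriminate)) as H0.
      simpl in H0. exact H0. }
  rewrite (is_lim_seq_unique _ _ H). reflexivity.
Qed.

Lemma ln_nonneg x : 1 <= x -> 0 <= ln x.
Proof. intros. rewrite <- ln_1. apply ln_le; lra. Qed.

Lemma SH h N : 0 < h -> -(h * (INR N + 1) * ln (INR N + 1)) <= Sp (1+h) N - harmonic (S N) <= 0.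
Proof.
  intros Hh. induction N.
  - rewrite Sp_0, u_eq. simpl. replace (0+1) with 1 by ring. rewrite ln_1.
    replace (-((1+h)*0)) with 0 by ring. rewrite exp_0. lra.
  - rewrite Sp_succ, (harm_S (S N)).
    set (m := INR (S N) + 1).
    assert (Hm : 1 <= m) by (unfold m; apply INR_pos1).
    assert (Em : INR (S (S N)) = m) by (unfold m; rewrite (S_INR (S N)); ring).
    rewrite Em. rewrite u_eq. fold m.
    set (L := ln m). assert (HL : 0 <= L) by (apply ln_nonneg; lra).
    assert (E : exp (-((1+h)*L)) = exp (-(h*L)) * (1/m)).
    { unfold L. rewrite <- exp_inv_ln by lra. rewrite <- exp_plus. f_equal; ring. }
    rewrite E.
    pose proof (exp_ineq1_le (-(h*L))).
    assert (exp (-(h*L)) <= 1) by (rewrite <- exp_0; apply exp_le_mono; nra).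
    assert (Hd : -(h*L) <= exp (-(h*L)) * (1/m) - /m <= 0).
    { replace (exp (-(h*L)) * (1/m) - /m) with ((exp (-(h*L)) - 1) * (/m)) by (field; lra).
      assert (0 < /m <= 1). { split. apply Rinv_0_lt_compat; lra. rewrite <- Rinv_1. apply Rinv_le_contravar; lra. }
      split; nra. }
    assert (Hmono : ln (INR N + 1) <= L) by (unfold L, m; apply ln_le; [apply Rlt_le_trans with 1; [lra|apply INR_pos1]| rewrite S_INR; lra]).
    assert (h * (INR N + 1) * ln (INR N + 1) <= h * (INR N + 1) * L).
    { apply Rmult_le_compat_l; auto. apply Rmult_le_pos. lra. pose proof (pos_INR N); lra. }
    assert (Em2 : m = INR N + 1 + 1) by (unfold m; rewrite S_INR; ring).
    replace (h*m*L) with (h*(INR N+1)*L + h*L) by (rewrite Em2; ring). lra.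
Qed.

Lemma gL h L : 0 < h -> 0 <= L -> L - h*L^2 <= (1 - exp (-(h*L)))/h <= L.
Proof.
  intros Hh HL.
  assert (0 <= h*L) by nra.
  assert (H1 : 1 - exp (-(h*L)) <= h*L) by (pose proof (exp_ineq1_le (-(h*L))); lra).
  assert (H2 : h*L - (h*L)^2 <= 1 - exp (-(h*L))).
  { rewrite exp_Ropp. pose proof (exp_ineq1_le (h*L)).
    assert (/ exp (h*L) <= / (1 + h*L)) by (apply Rinv_le_contravar; lra).
    assert (/(1+h*L) = 1 - h*L/(1+h*L)) by (field; lra).
    assert (h*L - (h*L)^2 <= h*L/(1+h*L)).
    { apply Rmult_le_reg_r with (1+h*L). lra. unfold Rdiv. rewrite Rmult_assoc, Rinv_l by lra.
      assert (0 <= (h*L)^3) by (apply pow_le; lra). nra. }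
    lra. }
  split.
  - apply Rmult_le_reg_l with h; auto. unfold Rdiv. replace (h * ((1 - exp (-(h*L))) * /h)) with (1 - exp (-(h*L))) by (field; lra).
    replace (h*(L - h*L^2)) with (h*L - (h*L)^2) by ring. lra.
  - apply Rmult_le_reg_l with h; auto. unfold Rdiv. replace (h * ((1 - exp (-(h*L))) * /h)) with (1 - exp (-(h*L))) by (field; lra). lra.
Qed.

Lemma AG h N : 0 < h ->
  Rabs (A h N - G N) <= h * ((INR N + 1) * ln (INR N + 1) + (ln (INR (S N) + 1))^2).
Proof.
  intros Hh. pose proof (SH h N Hh).
  set (L := ln (INR (S N) + 1)).
  assert (HL : 0 <= L) by (apply ln_nonneg; apply INR_pos1).
  pose proof (gL h L Hh HL).
  assert (E : A h N - G N = (Sp (1+h) N - harmonic (S N)) - ((1 - exp (-(h*L)))/h - L)) by (unfold A, G, g, L; ring).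
  rewrite E. apply Rabs_le. nra.
Qed.

Lemma zeta_near1 eps : 0 < eps -> exists delta, 0 < delta /\
  forall h, 0 < h < delta -> Rabs (zeta (1+h) - 1/h - euler_gamma) < eps.
Proof.
  intros He. rewrite euler_gamma_eq.
  destruct (INR_archimed (eps/4) 1 ltac:(lra)) as [N HN].
  set (C := (INR N + 1) * ln (INR N + 1) + (ln (INR (S N) + 1))^2).
  assert (HC : 0 <= C).
  { unfold C. apply Rplus_le_le_0_compat. apply Rmult_le_pos. pose proof (pos_INR N); lra.
    apply ln_nonneg, INR_pos1. apply pow2_ge_0. }
  assert (HN2 : 1/(INR N + 2) < eps/4).
  { pose proof (pos_INR N). apply Rmult_lt_reg_r with (INR N + 2). lra.
    replace (1/(INR N + 2) * (INR N + 2)) with 1 by (field; lra). nra. }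
  exists (eps/(2*(C+1))). split. apply Rdiv_lt_0_compat; lra.
  intros h [Hh Hd].
  pose proof (Z_tail h N Hh). pose proof (AG h N Hh). fold C in H0. pose proof (G_gam N).
  assert (HhC : h*C < eps/2).
  { assert (h*C <= h*(C+1)) by nra.
    assert (h*(C+1) < eps/(2*(C+1))*(C+1)) by (apply Rmult_lt_compat_r; lra).
    replace (eps/(2*(C+1))*(C+1)) with (eps/2) in H3 by (field; lra). lra. }
  apply Rabs_le_between in H0.
  apply Rabs_def1; lra.
Qed.

Lemma ln4 : ln 4 = 2 * ln 2.
Proof. replace 4 with (2*2) by ring. rewrite ln_mult by lra. ring. Qed.
Lemma ln8 : ln 8 = 3 * ln 2.
Proof. replace 8 with (2*(2*2)) by ring. rewrite !ln_mult by lra. ring. Qed.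
Lemma ln9 : ln 9 = 2 * ln 3.
Proof. replace 9 with (3*3) by ring. rewrite ln_mult by lra. ring. Qed.

Lemma zeta_large x : 1 < x ->
  exists r, zeta x = 1 + exp (-(x*ln 2)) + exp (-(x*ln 3)) + exp (-(x*ln 2))^2 + r
    /\ 0 <= r <= 4 * exp (-(x*ln 2))^2 / (x-1).
Proof.
  intros Hx. set (h := x - 1). assert (Hh : 0 < h) by (unfold h; lra).
  replace x with (1+h) by (unfold h; ring).
  set (a := exp (-((1+h)*ln 2))).
  assert (E3 : Sp (1+h) 3 = 1 + a + exp (-((1+h)*ln 3)) + a^2).
  { unfold Sp. rewrite !sum_Sn, sum_O. unfold plus; simpl. rewrite !u_eq. simpl.
    replace (1+1+1+1) with 4 by ring. replace (1+1+1) with 3 by ring.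
    replace (0+1) with 1 by ring. replace (1+1) with 2 by ring. rewrite ln_1, ln4.
    replace (-((1+h)*0)) with 0 by ring. rewrite exp_0. unfold a.
    replace (-((1+h)*(2*ln 2))) with (-((1+h)*ln 2) + -((1+h)*ln 2)) by ring. rewrite exp_plus. ring. }
  assert (Eg : g h 3 = 4 * a^2).
  { unfold g, a. simpl. replace (1+1+1+1) with 4 by ring. rewrite ln4.
    replace (-(h*(2*ln 2))) with (2 * ln 2 + (-((1+h)*ln 2) + -((1+h)*ln 2))) by ring.
    rewrite !exp_plus. rewrite <- ln4. rewrite exp_ln by lra. ring. }
  exists (zeta (1+h) - Sp (1+h) 3). split. rewrite E3. ring.
  pose proof (zeta_lim h Hh) as HL. apply (is_lim_seq_incr_n _ 3) in HL.
  split.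
  - assert (Rbar_le (Sp (1+h) 3) (zeta (1+h))).
    { apply (is_lim_seq_le (fun _ => Sp (1+h) 3) (fun n => Sp (1+h) (n+3)%nat)); auto.
      intros n. rewrite Nat.add_comm. idtac.
      clear HL. induction n. rewrite Nat.add_0_r; lra.
      rewrite Nat.add_succ_r. pose proof (Sp_incr (1+h) (3+n)). lra.
      apply is_lim_seq_const. }
    simpl in H. lra.
  - assert (Rbar_le (zeta (1+h)) (Sp (1+h) 3 + g h 3 / h)).
    { apply (is_lim_seq_le (fun n => Sp (1+h) (n+3)%nat) (fun _ => Sp (1+h) 3 + g h 3 / h)); auto.
      intros n. rewrite Nat.add_comm. pose proof (tail h 3 n Hh). pose proof (g_pos h (3+n)).
      apply Rmult_le_reg_l with h; auto. rewrite Rmult_plus_distr_l.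
      replace (h * (g h 3 / h)) with (g h 3) by (field; lra). lra.
      apply is_lim_seq_const. }
    simpl in H. rewrite Eg in H. replace (1+h-1) with h by ring. lra.
Qed.

Lemma logs : 0 < ln 2 /\ ln 2 < ln 3 /\ ln 3 < 2 * ln 2 /\ 1/9 <= 2 * ln 3 - 3 * ln 2.
Proof.
  rewrite <- ln4, <- ln8, <- ln9. split; [|split; [|split]].
  - rewrite <- ln_1. apply ln_increasing; lra.
  - apply ln_increasing; lra.
  - apply ln_increasing; lra.
  - pose proof (dln_bounds 8 ltac:(lra)). replace (8+1) with 9 in H by ring. lra.
Qed.

Theorem mainTheorem11 :
  is_lim
    (fun x : R =>
       zeta (ln (ln (ln (zeta x) + 1) + 1) + 1)
       - Rpower 2 x + Rpower (4 / 3) x - 1 / 2)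
    p_infty euler_gamma.
Proof.
  apply is_lim_spec. intros eps. pose proof (cond_pos eps) as He.
  destruct (zeta_near1 (eps/2) ltac:(lra)) as [delta [Hdel Hz]].
  set (m := Rmin (Rmin (1/100) (delta/4)) (eps/160)).
  assert (Hm : 0 < m) by (unfold m; repeat apply Rmin_glb_lt; lra).
  assert (Hm1 : m <= 1/100 /\ m <= delta/4 /\ m <= eps/160).
  { unfold m. pose proof (Rmin_l (Rmin (1/100) (delta/4)) (eps/160)).
    pose proof (Rmin_r (Rmin (1/100) (delta/4)) (eps/160)).
    pose proof (Rmin_l (1/100) (delta/4)). pose proof (Rmin_r (1/100) (delta/4)). lra. }
  simpl. exists (1 + 10/m). intros x Hx.
  assert (H10 : 0 < 10/m) by (apply Rdiv_lt_0_compat; lra).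
  assert (Hx1 : 1 < x) by lra.
  set (t := 10/(x-1)).
  assert (Ht : t < m).
  { unfold t. apply Rmult_lt_reg_r with (x-1). lra.
    replace (10/(x-1)*(x-1)) with 10 by (field; lra).
    assert (10/m * m = 10) by (field; lra). nra. }
  assert (Ht0 : 0 < t) by (unfold t; apply Rdiv_lt_0_compat; lra).
  destruct logs as [Hl2 [Hl23 [Hl34 Hl98]]].
  set (lam := ln 2) in *. set (mu := ln 3) in *.
  set (a := exp (-(x*lam))). set (b := exp (-(x*mu))).
  set (q := exp (x*(3*lam - 2*mu))).
  assert (Ha : 0 < a) by apply exp_pos. assert (Hb : 0 < b) by apply exp_pos.
  assert (Hq : q <= t).
  { unfold q. pose proof (exp_ineq1_le (x*(2*mu - 3*lam))).
    replace (x*(3*lam - 2*mu)) with (-(x*(2*mu - 3*lam))) by ring. rewrite exp_Ropp.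
    assert (x/9 <= x*(2*mu-3*lam)) by nra.
    apply Rle_trans with (/ (1 + x/9)). apply Rinv_le_contravar; lra.
    unfold t. apply Rle_trans with (9/x).
    { replace (9/x) with (/ (x/9)) by (field; lra). apply Rinv_le_contravar; lra. }
    apply Rmult_le_reg_r with (x*(x-1)). nra.
    replace (9/x*(x*(x-1))) with (9*(x-1)) by (field; lra).
    replace (10/(x-1)*(x*(x-1))) with (10*x) by (field; lra). lra. }
  assert (Haq : a <= q) by (unfold a, q; apply exp_le_mono; nra).
  assert (Hbq : b <= a * q).
  { unfold a, b, q. rewrite <- exp_plus. apply exp_le_mono. nra. }
  assert (Hb2 : b^2 = a^3 * q).
  { unfold a, b, q. replace (exp (-(x*mu))^2) with (exp (-(x*mu)) * exp(-(x*mu))) by ring.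
    replace (exp (-(x*lam))^3) with (exp (-(x*lam)) * exp (-(x*lam)) * exp(-(x*lam))) by ring.
    rewrite <- !exp_plus. f_equal. ring. }
  destruct (zeta_large x Hx1) as [r [Hzr Hr]]. fold lam mu a b in Hzr, Hr.
  assert (Hrt : r <= a^2 * t).
  { replace (a^2*t) with (10 * a^2 / (x-1)) by (unfold t; field; lra).
    assert (4 * a^2 / (x-1) <= 10 * a^2/(x-1)).
    { unfold Rdiv. apply Rmult_le_compat_r. left; apply Rinv_0_lt_compat; lra. nra. }
    lra. }
  set (v := a + b + a^2 + r).
  assert (Hv : 0 <= v) by (unfold v; nra).
  set (L1 := ln (1+v)). set (L2 := ln (1+L1)). set (L3 := ln (1+L2)).
  assert (HL1p : 0 <= L1) by (apply ln_nonneg; lra).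
  assert (HL2p : 0 <= L2) by (apply ln_nonneg; lra).
  destruct (core_alg a b r t L1 L2 L3) as [HL3a HF]; auto; try lra.
  - apply Rle_trans with (a*q). auto. apply Rmult_le_compat_l; lra.
  - rewrite Hb2. apply Rmult_le_compat_l. apply pow_le; lra. lra.
  - split; [apply ln1p_lower | apply ln1p_upper]; auto.
  - split; [apply ln1p_lower | apply ln1p_upper]; auto.
  - split; [apply ln1p_lower | apply ln1p_upper]; auto.
  - assert (HL3d : L3 < delta).
    { assert (L3 <= L2) by (apply ln1p_le; auto). assert (L2 <= L1) by (apply ln1p_le; auto).
      assert (L1 <= v) by (apply ln1p_le; auto).
      assert (v <= 4*t).
      { unfold v. assert (a^2 <= a) by nra. assert (a^2*t <= t) by nra. assert (a*q <= q) by nra. lra. }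
      lra. }
    assert (HL3p : 0 < L3) by lra.
    assert (Hzeq : ln (ln (ln (zeta x) + 1) + 1) + 1 = 1 + L3).
    { unfold L3, L2, L1, v. rewrite Hzr. replace (1 + a + b + a^2 + r) with (1 + (a+b+a^2+r)) by ring.
      rewrite !(Rplus_comm _ 1). reflexivity. }
    rewrite Hzeq.
    assert (HR2 : Rpower 2 x = 1/a).
    { unfold Rpower, a. fold lam. rewrite exp_Ropp. field. apply Rgt_not_eq, exp_pos. }
    assert (HR43 : Rpower (4/3) x = b / a^2).
    { unfold Rpower. rewrite ln_div by lra. rewrite ln4. fold lam mu.
      unfold a, b. replace (exp (-(x*lam))^2) with (exp (-(x*lam)) * exp(-(x*lam))) by ring. rewrite <- exp_plus.
      replace (x * (2*lam - mu)) with (-(x*mu) + - (-(x*lam) + -(x*lam))) by ring.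
      rewrite exp_plus, exp_Ropp, (exp_Ropp (-(x*lam) + -(x*lam))). unfold Rdiv. reflexivity. }
    rewrite HR2, HR43.
    specialize (Hz L3 ltac:(lra)).
    replace (zeta (1 + L3) - 1/a + b/a^2 - 1/2 - euler_gamma)
      with ((zeta (1+L3) - 1/L3 - euler_gamma) + (1/L3 - 1/a + b/a^2 - 1/2)) by ring.
    eapply Rle_lt_trans. apply Rabs_triang. lra.
Qed.
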